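(* For every $n\ge 2$, $N(n)$ is even.
   Context: A semi-Heyting algebra is an algebra $\langle L,\vee,\wedge,\to,0,1\rangle$ such that: (SH1) $\langle L,\vee,\wedge,0,1\rangle$ is a bounded lattice with least element $0$ and greatest element $1$; (SH2) $x\wedge(x\to y)=x\wedge y$; (SH3) $x\wedge(y\to z)=x\wedge[(x\wedge y)\to(x\wedge z)]$; (SH4) $x\to x=1$, for all $x,y,z\in L$. For $n\ge 1$, $C_n$ denotes the chain $a_0<a_1<\cdots<a_{n-1}$ with $0=a_0$, $1=a_{n-1}$ (for $n=1$, $0=1$), with $\wedge=\min$, $\vee=\max$. $N(n)$ denotes the number of binary operations $\to$ on $C_n$ such that $\langle C_n,\vee,\wedge,\to,0,1\rangle$ is a semi-Heyting algebra. *)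

(* Defs.v *)
From mathcomp Require Import all_boot.
Set Implicit Arguments. Unset Strict Implicit. Unset Printing Implicit Defensive.

(* The chain C_n is modelled by the ordinal type 'I_n (elements a_0 < ... < a_{n-1},
   with a_i represented by i). Meet = min, join = max, 0 = a_0, 1 = a_{n-1}. *)
Definition cmeet (n : nat) (x y : 'I_n) : 'I_n := if (x <= y)%N then x else y.
Definition cjoin (n : nat) (x y : 'I_n) : 'I_n := if (x <= y)%N then y else x.

Definition is_top (n : nat) (x : 'I_n) : bool := val x == n.-1.

Definition binop (n : nat) := {ffun 'I_n * 'I_n -> 'I_n}.

(* (SH2)-(SH4); (SH1) holds automatically for the chain C_n. *)
Definition semiHeyting (n : nat) (imp : binop n) : bool :=
  [&& [forall x : 'I_n, forall y : 'I_n,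
        cmeet x (imp (x, y)) == cmeet x y],
      [forall x : 'I_n, forall y : 'I_n, forall z : 'I_n,
        cmeet x (imp (y, z)) == cmeet x (imp (cmeet x y, cmeet x z))] &
      [forall x : 'I_n, is_top (imp (x, x))]].

Definition N (n : nat) : nat := #|[pred imp : binop n | semiHeyting imp]|.

(* Main.v *)
Require Import Defs.
From mathcomp Require Import all_boot.

Section S.
Variable m : nat.
Local Notation n := m.+2.
Definition aa : 'I_n := Ordinal (leqnSn m.+1).
Definition bb : 'I_n := ord_max.
Definition swp (v : 'I_n) : 'I_n := if v == aa then bb else if v == bb then aa else v.
Definition fl (imp : binop n) : binop n :=
  [ffun p => if p == (aa, bb) then swp (imp p) else imp p].

Lemma ab_neq : aa != bb.
Proof. by apply/eqP => /(congr1 val) /= /eqP; rewrite eqn_leq ltnn andbF. Qed.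

Lemma swpK v : swp (swp v) = v.
Proof.
rewrite /swp; case: (v =P aa) => [->|na]; first by rewrite eq_sym (negbTE ab_neq) eqxx.
case: (v =P bb) => [->|nb]; first by rewrite eqxx.
by move/eqP/negbTE: na => ->; move/eqP/negbTE: nb => ->.
Qed.

Lemma flK : involutive fl.
Proof.
move=> imp; apply/ffunP => p; rewrite !ffunE.
by case: ifP => h; rewrite h ?swpK.
Qed.

Lemma meet_swp x v : x != bb -> cmeet x (swp v) = cmeet x v.
Proof.
move=> nx; have hx : (val x <= m)%N.
  by move: (ltn_ord x) nx; rewrite ltnS leq_eqVlt => /orP [/eqP e|//];
     rewrite (_ : x = bb) ?eqxx //; apply: val_inj.
rewrite /swp /cmeet; case: (v =P aa) => [->|_] /=.
  by rewrite hx (leq_trans hx).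
case: (v =P bb) => [->|_] //=.
by rewrite hx (leq_trans hx).
Qed.

Lemma meet_fl imp x p : x != bb -> cmeet x (fl imp p) = cmeet x (imp p).
Proof. by move=> nx; rewrite ffunE; case: ifP => // _; rewrite meet_swp. Qed.

Lemma cmeet_top y : cmeet bb y = y.
Proof.
rewrite /cmeet; case: ifP => // h; apply: val_inj => /=.
by apply/eqP; rewrite eqn_leq h -ltnS ltn_ord.
Qed.

Lemma SH_fl imp : semiHeyting imp -> semiHeyting (fl imp).
Proof.
move=> /and3P [H2 H3 H4]; apply/and3P; split.
- apply/forallP=> x; apply/forallP=> y.
  have := forallP (forallP H2 x) y.
  rewrite ffunE; case: ifP => // /eqP [-> _].
  by rewrite meet_swp // ab_neq.
- apply/forallP=> x; apply/forallP=> y; apply/forallP=> z.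
  case: (x =P bb) => [->|/eqP nx].
    by rewrite !cmeet_top eqxx.
  by rewrite !meet_fl //; exact: (forallP (forallP (forallP H3 x) y) z).
- apply/forallP=> x; rewrite ffunE; case: ifP => [/eqP [e1 e2]|_].
    by move: ab_neq; rewrite -e1 -e2 eqxx.
  exact: (forallP H4 x).
Qed.

Lemma val_ab {imp : binop n} : semiHeyting imp -> imp (aa, bb) = aa \/ imp (aa, bb) = bb.
Proof.
move=> /and3P [H2 _ _]; have := forallP (forallP H2 aa) bb.
set v := imp (aa, bb).
have -> : cmeet aa bb = aa by rewrite /cmeet /= leqnSn.
rewrite /cmeet; case: ifP => h; last first.
  by move/eqP => e; move: h; rewrite e leqnn.
move=> _; have hv := ltn_ord v.
move: h; rewrite leq_eqVlt => /orP [/eqP e|h].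
  by left; apply: val_inj.
by right; apply: val_inj => /=; apply/eqP; rewrite eqn_leq -ltnS hv.
Qed.

Lemma evenN : ~~ odd (N n).
Proof.
set A := [set imp : binop n | semiHeyting imp].
set B := [set imp : binop n | imp (aa, bb) == aa].
have -> : N n = #|A| by rewrite /N cardsE.
rewrite -(cardsID B A).
have -> : A :\: B = fl @: (A :&: B).
  apply/setP => imp; rewrite !inE; apply/andP/imsetP.
  - move=> [hn hs]; exists (fl imp); last by rewrite flK.
    rewrite !inE SH_fl //= ffunE eqxx.
    case: (val_ab hs) => e; first by rewrite e eqxx in hn.
    have nba : (bb == aa) = false by rewrite eq_sym (negbTE ab_neq).
    by rewrite e /swp nba !eqxx.
  - move=> [j]; rewrite !inE => /andP [js /eqP ja] ->; split; last exact: SH_fl.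
    by rewrite ffunE eqxx ja /swp eqxx eq_sym ab_neq.
by rewrite card_imset ?addnn ?odd_double //; apply: (can_inj flK).
Qed.
End S.

Theorem mainTheorem4 (n : nat) : (2 <= n)%N -> ~~ odd (N n).
Proof.
by case: n => [|[|m]] // _; exact: evenN.
Qed.
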